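(* Let $G_1$ and $G_2$ be graphs on $n$ nodes with Laplacian matrices $Q_1,Q_2$, let $k\in\{1,\dots,n\}$, and let $\hat B$ be an $n\times n$ zero-one matrix with exactly $k$ ones in every row and every column. For $p\ge 0$ let $$Q(p)=\begin{bmatrix} Q_1+kpI & -p\hat B\\ -p\hat B^T & Q_2+kpI\end{bmatrix},$$ with eigenvalues $0=\mu_N(p)\le \mu_{N-1}(p)\le\dots\le\mu_1(p)$, $N=2n$. Define the transition threshold $p^*=\sup\big(\{0\}\cup\{p>0:\ \mu_{N-1}(p)=2kp\}\big)$. Then $$p^*\ge \frac{1}{2k}\min\big(\mu_{n-1}(Q_1),\ \mu_{n-1}(Q_2)\big),$$ where $\mu_{n-1}(Q_i)$ denotes the second smallest eigenvalue (algebraic connectivity) of $Q_i$.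
   Context: $Q(p)$ is the Laplacian of the two-layer interdependent network with a $k$-to-$k$ interconnection of weight $p$; $2kp$ is always an eigenvalue of $Q(p)$ (eigenvector $[u^T,-u^T]^T$). The paper describes $p^*$ as the coupling value beyond which $\mu_{N-1}(p)\neq 2kp$; here it is formalized as the supremum above. *)

(* Defs.v *)
From HB Require Import structures.
From mathcomp Require Import all_boot all_order all_algebra.
From mathcomp Require Import boolp classical_sets reals constructive_ereal ereal.
Set Implicit Arguments. Unset Strict Implicit. Unset Printing Implicit Defensive.
Import Order.TTheory GRing.Theory Num.Theory.
Local Open Scope ring_scope.

Definition simple_graph (n : nat) (e : rel 'I_n) : Prop :=
  (forall i j, e i j = e j i) /\ (forall i, e i i = false).

Definition laplacian (R : pzRingType) (n : nat) (e : rel 'I_n) : 'M[R]_n :=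
  \matrix_(i, j) (if i == j then (#|[set l | e i l]|)%:R
                  else - (e i j)%:R).

Definition is_spectrum (R : realType) (m : nat) (A : 'M[R]_m) (s : seq R) : Prop :=
  sorted <=%R s /\ char_poly A = \prod_(x <- s) ('X - x%:P).

(* The sorted eigenvalue list of A (chosen classically; for real symmetric
   matrices it exists and is unique). *)
Definition spectrum (R : realType) (m : nat) (A : 'M[R]_m) : seq R :=
  xget [::] [set s | is_spectrum A s].

(* second smallest eigenvalue (mu_{m-1} in the paper's descending indexing) *)
Definition second_smallest_eig (R : realType) (m : nat) (A : 'M[R]_m) : R :=
  (spectrum A)`_1.

Definition supraQ (R : realType) (n k : nat) (Q1 Q2 B : 'M[R]_n) (p : R)
  : 'M[R]_(n + n) :=
  block_mx (Q1 + (k%:R * p)%:M) (- p *: B) (- p *: B^T) (Q2 + (k%:R * p)%:M).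

Definition transition_threshold (R : realType) (n k : nat) (Q1 Q2 B : 'M[R]_n)
  : \bar R :=
  ereal_sup [set (p%:E)%E | p in
     [set p : R | p = 0 \/ (0 < p /\ second_smallest_eig (supraQ k Q1 Q2 B p)
                                      = 2 * k%:R * p)]].

(* Main.v *)
Require Import Defs.
From HB Require Import structures.
From mathcomp Require Import all_boot all_order all_algebra.
From mathcomp Require Import boolp classical_sets reals constructive_ereal ereal.
From mathcomp Require Import spectral sesquilinear.
From mathcomp.real_closed Require Import complex.
From mathcomp Require Import ring lra.
Import Order.TTheory GRing.Theory Num.Theory.
Set Implicit Arguments. Unset Strict Implicit. Unset Printing Implicit Defensive.
Local Open Scope ring_scope.
Lemma char_poly_conj (F : fieldType) n (P D : 'M[F]_n) : P \in unitmx ->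
  char_poly (invmx P *m D *m P) = char_poly D.
Proof.
move=> Pu; rewrite /char_poly /char_poly_mx.
set Pp := map_mx polyC P.
have Ppu : Pp \in unitmx by rewrite map_unitmx.
have -> : map_mx polyC (invmx P *m D *m P) = invmx Pp *m map_mx polyC D *m Pp.
  by rewrite !map_mxM map_invmx.
have eX : ('X%:M : 'M_n) = invmx Pp *m 'X%:M *m Pp.
  by rewrite -mulmxA -scalar_mxC mulmxA mulVmx // mul1mx.
rewrite {1}eX -mulmxBl -mulmxBr !det_mulmx mulrC mulrA -det_mulmx mulmxV //.
by rewrite det1 mul1r.
Qed.

Section Spec.
Variable R : realType.
Local Notation C := (R[i]).
Local Notation toC := (real_complex R).

Definition mC m n (A : 'M[R]_(m,n)) : 'M[C]_(m,n) := map_mx toC A.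

Lemma mC_herm m (A : 'M[R]_m) : trmx A = A -> mC A \is hermsymmx.
Proof.
move=> sA; apply: realsym_hermsym.
  apply/is_hermitianmxP; rewrite expr0 scale1r.
  apply/matrixP=> i j; rewrite !mxE.
  by rewrite -[in LHS]sA mxE.
by apply/mxOverP => i j; rewrite mxE; apply/complex_realP; exists (A i j).
Qed.

Lemma sym_spec m (A : 'M[R]_m) : trmx A = A ->
  exists (P : 'M[C]_m) (dr : 'rV[R]_m),
    [/\ P \is unitarymx, mC A = invmx P *m diag_mx (mC dr) *m P &
        char_poly A = \prod_(i < m) ('X - (dr 0 i)%:P)].
Proof.
move=> sA; have H := mC_herm sA.
have /orthomx_spectralP Aeq := hermitian_normalmx H.
have dreal := hermitian_spectral_diag_real H.
set P := spectralmx _ in Aeq; set d := spectral_diag _ in Aeq dreal.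
pose dr := \row_i (@complex.Re R (d 0 i)).
have ddr : mC dr = d.
  apply/matrixP => i j; rewrite !mxE ord1.
  by apply: RRe_real; apply: (mxOverP dreal).
exists P, dr; split.
- exact: spectral_unitarymx.
- by rewrite ddr.
apply: (map_poly_inj toC).
rewrite map_char_poly -/(mC A) Aeq char_poly_conj ?spectral_unit //.
rewrite char_poly_trig ?diag_mx_is_trig // rmorph_prod.
apply: eq_bigr => i _; rewrite !mxE eqxx mulr1n rmorphB /= map_polyX map_polyC.
by rewrite -ddr mxE.
Qed.

End Spec.

Lemma mx3E (T : comNzRingType) m (x : 'rV[T]_m) (M : 'M_m) (y : 'cV_m) :
  (x *m M *m y) 0 0 = \sum_a \sum_b x 0 a * M a b * y b 0.
Proof.
rewrite mxE; under eq_bigr do rewrite mxE big_distrl /=.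
by rewrite exchange_big.
Qed.

Section S.
Variable R : realType.
Local Notation C := (R[i]).
Local Notation Re := (@complex.Re R).
Local Notation Im := (@complex.Im R).

Lemma conjE (z : C) : Num.conj z = conjc z.
Proof. by []. Qed.

Lemma ReM3 (a b : C) (r : R) :
  Re (a * (r%:C)%C * (Num.conj b)) = r * (Re a * Re b + Im a * Im b).
Proof. by case: a => a1 a2; case: b => b1 b2; rewrite /= ; ring. Qed.
Lemma ImM3 (a b : C) (r : R) :
  Im (a * (r%:C)%C * (Num.conj b)) = r * (Im a * Re b - Re a * Im b).
Proof. by case: a => a1 a2; case: b => b1 b2; rewrite /= ; ring. Qed.
End S.

Section L.
Variable R : realFieldType.

Lemma count_lt_s1 (s : seq R) : sorted <=%R s ->
  (count (fun x : R => (x < s`_1)%R) s <= 1)%N.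
Proof.
case: s => [|a [|b t]] //=; first by move=> _; case: (_ < _).
move=> /andP[_ pt].
have /allP Hb := order_path_min (@le_trans _ _) pt.
rewrite ltxx /=.
have -> : count (fun x => x < b) t = 0%N.
  rewrite (eq_in_count (a2 := pred0)) ?count_pred0 // => x /Hb.
  by rewrite /= leNgt => /negbTE.
by case: (a < b).
Qed.

Lemma sorted_s1_le (s : seq R) (x y mu : R) : sorted <=%R s ->
  x \in s -> y \in s -> x != y -> x <= mu -> y <= mu -> s`_1 <= mu.
Proof.
case: s => [|a [|b t]] //=.
  by rewrite !inE => _ /eqP-> /eqP->; rewrite eqxx.
move=> /andP[_ pt]; have /allP Hb := order_path_min (@le_trans _ _) pt.
move=> xin yin nxy xmu ymu; rewrite leNgt; apply/negP => bmu.
have big z : z \in b :: t -> mu < z.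
  rewrite inE => /orP[/eqP->//|/Hb zb]; exact: lt_le_trans zb.
move: xin yin nxy; rewrite !inE => /orP[/eqP xa|xin] /orP[/eqP ya|yin].
- by rewrite xa ya eqxx.
- by move: ymu; rewrite leNgt big // inE yin orbT.
- by move: xmu; rewrite leNgt big // inE xin orbT.
- by move: xmu; rewrite leNgt big // inE xin orbT.
Qed.

Lemma count_card m (p : pred 'I_m) : count p (index_enum 'I_m) = #|p|.
Proof. by rewrite -sum1_count sum1_card. Qed.

End L.

Section Bridge.
Variable R : realType.
Local Notation C := (R[i]).
Local Notation Re := (@complex.Re R).
Local Notation Im := (@complex.Im R).
Local Open Scope sesquilinear_scope.

Definition qfs m (A : 'M[R]_m) (x : 'I_m -> R) := \sum_a \sum_b x a * A a b * x b.
Definition n2 m (x : 'I_m -> R) := \sum_a x a ^+ 2.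
Definition dotr m (x w : 'I_m -> R) := \sum_a x a * w a.

Lemma Re_sum m (F : 'I_m -> C) : Re (\sum_i F i) = \sum_i Re (F i).
Proof.
apply: (big_ind2 (fun c x => Re c = x)) => // c1 x1 c2 x2 <- <-.
by case: c1; case: c2.
Qed.

Lemma Im_sum m (F : 'I_m -> C) : Im (\sum_i F i) = \sum_i Im (F i).
Proof.
apply: (big_ind2 (fun c x => Im c = x)) => // c1 x1 c2 x2 <- <-.
by case: c1; case: c2.
Qed.

Lemma C_real (c : C) : Im c = 0 -> c = ((Re c)%:C)%C.
Proof. by case: c => a b /= ->. Qed.

Lemma ReM2 (a : C) : Re (a * Num.conj a) = Re a ^+ 2 + Im a ^+ 2.
Proof. by case: a => a1 a2; rewrite /= ; ring. Qed.
Lemma ImM2 (a : C) : Im (a * Num.conj a) = 0.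
Proof. by case: a => a1 a2; rewrite /= ; ring. Qed.
Lemma ReM1 (a : C) (r : R) : Re (a * (r%:C)%C) = Re a * r.
Proof. by case: a => a1 a2; rewrite /= ; ring. Qed.
Lemma ImM1 (a : C) (r : R) : Im (a * (r%:C)%C) = Im a * r.
Proof. by case: a => a1 a2; rewrite /= ; ring. Qed.

Lemma form_split m (A : 'M[R]_m) (z : 'rV[C]_m) : trmx A = A ->
  (z *m mC A *m z^t*) 0 0 =
  ((qfs A (fun l => Re (z 0 l)) + qfs A (fun l => Im (z 0 l)))%:C)%C.
Proof.
move=> sA; have sAe a b : A a b = A b a by rewrite -[in LHS]sA mxE.
rewrite mx3E.
transitivity (\sum_a \sum_b z 0 a * ((A a b)%:C)%C * Num.conj (z 0 b)).
  by apply: eq_bigr => a _; apply: eq_bigr => b _; rewrite !mxE.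
rewrite [LHS]C_real.
  congr (_%:C)%C; rewrite Re_sum /qfs -big_split; apply: eq_bigr => a _.
  rewrite Re_sum -big_split; apply: eq_bigr => b _ /=.
  by rewrite ReM3; ring.
rewrite Im_sum.
under eq_bigr do rewrite Im_sum.
under eq_bigr do under eq_bigr do rewrite ImM3.
transitivity (\sum_a \sum_b A a b * (Im (z 0 a) * Re (z 0 b))
   - \sum_a \sum_b A a b * (Re (z 0 a) * Im (z 0 b))).
  rewrite -sumrB; apply: eq_bigr => a _; rewrite -sumrB; apply: eq_bigr => b _.
  by ring.
rewrite exchange_big /=; apply/eqP; rewrite subr_eq0; apply/eqP.
apply: eq_bigr => b _; apply: eq_bigr => a _; rewrite sAe; ring.
Qed.

Lemma norm_split m (z : 'rV[C]_m) :
  (z *m z^t*) 0 0 =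
  ((n2 (fun l => Re (z 0 l)) + n2 (fun l => Im (z 0 l)))%:C)%C.
Proof.
rewrite mxE.
transitivity (\sum_a z 0 a * Num.conj (z 0 a)).
  by apply: eq_bigr => a _; rewrite !mxE.
rewrite [LHS]C_real.
  congr (_%:C)%C; rewrite Re_sum /n2 -big_split; apply: eq_bigr => a _.
  by rewrite ReM2.
by rewrite Im_sum big1 // => a _; rewrite ImM2.
Qed.

Lemma dot_splitRe m (z : 'rV[C]_m) (w : 'rV[R]_m) :
  Re ((z *m (mC w)^T) 0 0) = dotr (fun l => Re (z 0 l)) (fun l => w 0 l).
Proof.
rewrite mxE Re_sum; apply: eq_bigr => a _; by rewrite !mxE ReM1.
Qed.

Lemma dot_splitIm m (z : 'rV[C]_m) (w : 'rV[R]_m) :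
  Im ((z *m (mC w)^T) 0 0) = dotr (fun l => Im (z 0 l)) (fun l => w 0 l).
Proof.
rewrite mxE Im_sum; apply: eq_bigr => a _; by rewrite !mxE ImM1.
Qed.

Lemma unitary_form m (P D : 'M[C]_m) (y : 'rV[C]_m) : P \is unitarymx ->
  (y *m P) *m (invmx P *m D *m P) *m (y *m P)^t* = y *m D *m y^t*.
Proof.
move=> Pu; rewrite invmx_unitary //.
have PP : P *m P^t* = 1%:M by apply/unitarymxP.
rewrite trmx_mul map_mxM !mulmxA -(mulmxA y P) PP mulmx1.
by rewrite -(mulmxA (y *m D) P) PP mulmx1.
Qed.

Lemma unitary_norm m (P : 'M[C]_m) (y : 'rV[C]_m) : P \is unitarymx ->
  (y *m P) *m (y *m P)^t* = y *m y^t*.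
Proof.
move=> Pu; have PP : P *m P^t* = 1%:M by apply/unitarymxP.
by rewrite trmx_mul map_mxM mulmxA -(mulmxA y P) PP mulmx1.
Qed.

Lemma diag_form m (d y : 'rV[C]_m) :
  (y *m diag_mx d *m y^t*) 0 0 = \sum_l d 0 l * (y 0 l * Num.conj (y 0 l)).
Proof.
rewrite mul_mx_diag mxE; apply: eq_bigr => l _; rewrite !mxE; ring.
Qed.

End Bridge.

Section Spectra.
Variable R : realType.
Local Notation C := (R[i]).
Local Notation Re := (@complex.Re R).
Local Notation Im := (@complex.Im R).
Local Open Scope sesquilinear_scope.

Lemma is_spectrum_perm m (A : 'M[R]_m) (dr : 'rV[R]_m) s :
  char_poly A = \prod_(i < m) ('X - (dr 0 i)%:P) -> is_spectrum A s ->
  perm_eq s [seq dr 0 i | i <- index_enum 'I_m].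
Proof. by move=> cp [_ cs]; apply: prod_XsubC_eq; rewrite -cs cp big_map. Qed.

Lemma spectrum_sym m (A : 'M[R]_m) : trmx A = A -> is_spectrum A (spectrum A).
Proof.
move=> sA; have [P [dr [_ _ cp]]] := sym_spec sA.
rewrite /spectrum; apply: xgetPex.
exists (sort <=%R [seq dr 0 i | i <- index_enum 'I_m]); split.
  by apply: sort_sorted; exact: le_total.
by rewrite cp (perm_big _ (permEl (perm_sort _ _))) big_map.
Qed.

Lemma two_small m (dr : 'rV[R]_m) s (mu : R) : sorted <=%R s ->
  perm_eq s [seq dr 0 i | i <- index_enum 'I_m] -> (1 < size s)%N -> s`_1 < mu ->
  exists i j, [/\ i != j, dr 0 i < mu & dr 0 j < mu].
Proof.
move=> ss ps s2 lt.
have: (1 < count (fun x : R => (x < mu)%R) s)%N.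
  case: s ss ps s2 lt => [|a [|b t]] //= /andP[ab _] _ _ bmu.
  by rewrite bmu (le_lt_trans ab bmu).
rewrite (permP ps) count_map count_card => /card_gt1P [i [j [hi hj nij]]].
by exists i, j.
Qed.

Lemma one_small m (dr : 'rV[R]_m) s i j : sorted <=%R s ->
  perm_eq s [seq dr 0 i | i <- index_enum 'I_m] -> i != j ->
  dr 0 i < s`_1 -> dr 0 j < s`_1 -> False.
Proof.
move=> ss ps nij hi hj.
have := count_lt_s1 ss; rewrite (permP ps) count_map count_card.
suff : (1 < #|preim (fun i0 : 'I_m => (dr 0 i0)%R) (fun x : R => (x < s`_1)%R)|)%N.
  by case: (#|_|) => [|[|]].
by apply/card_gt1P; exists i, j.
Qed.

Lemma conj_eq0 (a : C) : (a * Num.conj a == 0) = (a == 0).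
Proof. by rewrite mulf_eq0 conjC_eq0 orbb. Qed.

Lemma rayleigh_upper m (A : 'M[R]_m) s (w : 'rV[R]_m) (mu : R) :
  trmx A = A -> is_spectrum A s -> (1 < size s)%N ->
  (forall x : 'I_m -> R, dotr x (fun l => w 0 l) = 0 -> mu * n2 x <= qfs A x) ->
  mu <= s`_1.
Proof.
move=> sA [ss cs] s2 H.
have [P [dr [Pu Aeq cp]]] := sym_spec sA.
have ps := is_spectrum_perm cp (conj ss cs).
rewrite leNgt; apply/negP => lt1.
have [i [j [nij hi hj]]] := two_small ss ps s2 lt1.
have [nu [hinu hjnu numu]] : exists nu, [/\ dr 0 i <= nu, dr 0 j <= nu & nu < mu].
  by case: (leP (dr 0 i) (dr 0 j)) => h; [exists (dr 0 j) | exists (dr 0 i)];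
     split => //; apply: ltW.
set v := P *m (mC w)^T.
have vdef : v = P *m (mC w)^T by [].
clearbody v.
pose y : 'rV[C]_m := if (v i 0 == 0) && (v j 0 == 0) then delta_mx 0 i
   else v j 0 *: delta_mx 0 i - v i 0 *: delta_mx 0 j.
have rowv k : row k v 0 0 = v k 0 by rewrite mxE.
have yv : y *m v = 0.
  rewrite /y; case: ifP => [/andP[/eqP vi _]|_].
    by rewrite -rowE; apply/matrixP => a b; rewrite !ord1 rowv vi mxE.
  rewrite mulmxBl -!scalemxAl -!rowE.
  by apply/matrixP => a b; rewrite !ord1 !mxE mulrC subrr.
have y0 l : l != i -> l != j -> y 0 l = 0.
  move=> li lj; rewrite /y; case: ifP => _; rewrite !mxE (negbTE li) ?(negbTE lj) //=.
  by rewrite !mulr0 subrr.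
have yn0 : exists l, y 0 l != 0.
  rewrite /y; case: ifP => [_|/negbT]; first by exists i; rewrite !mxE !eqxx oner_eq0.
  rewrite negb_and => /orP[vin|vjn].
    exists j; rewrite !mxE !eqxx /= ?(eq_sym j i) ?(negbTE nij) /=.
    by rewrite mulr0 sub0r mulr1 oppr_eq0.
  exists i; rewrite !mxE !eqxx /= ?(eq_sym j i) ?(negbTE nij) /=.
  by rewrite mulr0 subr0 mulr1.
set z := y *m P.
have zw : (z *m (mC w)^T) 0 0 = 0 by rewrite -mulmxA -vdef yv mxE.
pose xr l := Re (z 0 l); pose xi l := Im (z 0 l).
have dr0 : dotr xr (fun l => w 0 l) = 0 by rewrite -dot_splitRe zw.
have di0 : dotr xi (fun l => w 0 l) = 0 by rewrite -dot_splitIm zw.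
have Hr := H _ dr0; have Hi := H _ di0.
have F1 := form_split z sA.
rewrite Aeq unitary_form // diag_form in F1.
have F2 := norm_split z.
rewrite unitary_norm // mxE in F2.
have F3 : \sum_l (y 0 l * Num.conj (y 0 l)) = ((n2 xr + n2 xi)%:C)%C.
  by rewrite -F2; apply: eq_bigr => l _; rewrite !mxE.
have ineq : ((qfs A xr + qfs A xi)%:C)%C <= ((nu * (n2 xr + n2 xi))%:C)%C.
  rewrite -F1 rmorphM /= -F3 mulr_sumr; apply: ler_sum => l _.
  rewrite mxE.
  have [->|yl] := eqVneq (y 0 l) 0; first by rewrite !(mul0r, mulr0) lexx.
  have dl : dr 0 l <= nu.
    have [->//|li] := eqVneq l i; have [->//|lj] := eqVneq l j.
    by move: yl; rewrite (y0 l li lj) eqxx.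
  by apply: ler_wpM2r; [exact: mul_conjC_ge0 | rewrite lecR].
rewrite lecR in ineq.
have N0 : 0 <= n2 xr + n2 xi.
  by apply: addr_ge0; apply: sumr_ge0 => l _; exact: sqr_ge0.
have NN : n2 xr + n2 xi = 0.
  apply/eqP; rewrite eq_le N0 andbT.
  have : (mu - nu) * (n2 xr + n2 xi) <= 0 by lra.
  by rewrite pmulr_rle0 // subr_gt0.
move: F3; rewrite NN => /eqP; rewrite psumr_eq0; last by move=> l _; exact: mul_conjC_ge0.
case: yn0 => l yl /allP /(_ l (mem_index_enum l)) /=.
by rewrite conj_eq0 (negbTE yl).
Qed.

End Spectra.

Section Lower.
Variable R : realType.
Local Notation C := (R[i]).
Local Notation Re := (@complex.Re R).
Local Notation Im := (@complex.Im R).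
Local Open Scope sesquilinear_scope.

Lemma conjR (r : R) : Num.conj ((r%:C)%C) = (r%:C)%C.
Proof. exact: conjc_real. Qed.

Lemma mC_tr_conj m n (M : 'M[R]_(m, n)) : (mC M)^t* = (mC M)^T.
Proof. by apply/matrixP => a b; rewrite !mxE conjR. Qed.

Lemma rayleigh_lower m (A : 'M[R]_m) s (w : 'rV[R]_m) :
  trmx A = A -> is_spectrum A s -> w != 0 -> w *m A = 0 -> 0 < s`_1 ->
  forall x : 'I_m -> R, dotr x (fun l => w 0 l) = 0 -> s`_1 * n2 x <= qfs A x.
Proof.
move=> sA [ss cs] wn0 wA s1p x xw.
have [P [dr [Pu Aeq cp]]] := sym_spec sA.
have ps := is_spectrum_perm cp (conj ss cs).
have Punit := unitarymx_unit Pu.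
have PP : P *m P^t* = 1%:M by apply/unitarymxP.
set z := mC (\row_l x l).
set y := z *m invmx P.
have zy : z = y *m P by rewrite /y mulmxKV.
set yw := mC w *m invmx P.
have wy : mC w = yw *m P by rewrite /yw mulmxKV.
have F1 := form_split z sA.
have Rez : (fun l => Re (z 0 l)) = x by apply: funext => l; rewrite !mxE.
have Imz : (fun l => Im (z 0 l)) = (fun=> 0) by apply: funext => l; rewrite !mxE.
clearbody y yw.
have q0 : qfs A (fun=> 0) = 0.
  by rewrite /qfs; apply: big1 => a _; apply: big1 => b _; rewrite !mul0r.
have n0 : n2 (fun _ : 'I_m => (0:R)) = 0.
  by rewrite /n2; apply: big1 => a _; rewrite expr0n.
rewrite Rez Imz q0 addr0 zy Aeq unitary_form // diag_form in F1.
have F2 := norm_split z.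
rewrite Rez Imz n0 addr0 zy unitary_norm // mxE in F2.
have F3 : \sum_l (y 0 l * Num.conj (y 0 l)) = ((n2 x)%:C)%C.
  by rewrite -F2; apply: eq_bigr => l _; rewrite !mxE.
have ywD : yw *m diag_mx (mC dr) = 0.
  have : mC w *m mC A = 0 by rewrite /mC -map_mxM wA map_mx0.
  rewrite {1}wy Aeq !mulmxA mulmxK // => /(congr1 (mulmx^~ (invmx P))).
  by rewrite mulmxK // mul0mx.
have ywd l : yw 0 l * (dr 0 l)%:C%C = 0.
  by have /matrixP /(_ 0 l) := ywD; rewrite mul_mx_diag !mxE.
have zw : (z *m (mC w)^t*) 0 0 = 0.
  rewrite mC_tr_conj mxE -[RHS](rmorph0 (real_complex R)) -xw rmorph_sum /=.
  by apply: congr_big => // l0 _; rewrite !mxE rmorphM.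
have yyw : \sum_l y 0 l * Num.conj (yw 0 l) = 0.
  rewrite -[RHS]zw zy wy trmx_mul map_mxM mulmxA -(mulmxA y P) PP mulmx1 mxE.
  by apply: eq_bigr => l _; rewrite !mxE.
have ywn0 : exists l, yw 0 l != 0.
  apply/existsP; move: wn0; apply: contraR; rewrite negb_exists => /forallP H0.
  have : yw = 0 by apply/rowP => l; rewrite mxE; apply/eqP; rewrite -[_ == _]negbK H0.
  move=> yw0; move: wy; rewrite yw0 mul0mx => wC0.
  apply/eqP/rowP => l; have /matrixP /(_ 0 l) := wC0; rewrite !mxE.
  by move=> [].
have key l : y 0 l = 0 \/ s`_1 <= dr 0 l.
  case: (leP (s`_1) (dr 0 l)) => hl; [by right | left].
  have others l' : l' != l -> yw 0 l' = 0.
    move=> nl; have : s`_1 <= dr 0 l'.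
      by rewrite leNgt; apply/negP => h'; apply: (one_small ss ps nl h' hl).
    move=> hl'; have /eqP := ywd l'; rewrite mulf_eq0 => /orP[/eqP//|].
    by rewrite fmorph_eq0 => /eqP d0; move: hl'; rewrite d0 leNgt s1p.
  have ywl : yw 0 l != 0.
    case: ywn0 => l' hl'; have [<-//|nl] := eqVneq l' l.
    by move: hl'; rewrite (others l' nl) eqxx.
  move: yyw; rewrite (bigD1 l) //= big1 ?addr0; last first.
    by move=> l' nl; rewrite others // conjC0 mulr0.
  by move/eqP; rewrite mulf_eq0 conjC_eq0 (negbTE ywl) orbF => /eqP.
rewrite -lecR -F1 rmorphM /= -F3 mulr_sumr; apply: ler_sum => l _.
rewrite mxE.
case: (key l) => [->|dl]; first by rewrite !(mul0r, mulr0) lexx.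
by apply: ler_wpM2r; [exact: mul_conjC_ge0 | rewrite lecR].
Qed.

End Lower.

Section Quad.
Variable R : realType.

Lemma qfs_shift m (A : 'M[R]_m) (u : 'I_m -> R) (a : R) :
  (forall i, \sum_j A i j = 0) -> (forall j, \sum_i A i j = 0) ->
  qfs A (fun i => u i + a) = qfs A u.
Proof.
move=> rs cs; rewrite /qfs.
transitivity (\sum_i \sum_j u i * A i j * u j +
  (\sum_i \sum_j a * (A i j * u j) +
   \sum_i \sum_j (u i * a * A i j + a ^+ 2 * A i j))).
  rewrite -!big_split /=; apply: eq_bigr => i _.
  rewrite -!big_split /=; apply: eq_bigr => j _; ring.
have T2 : \sum_i \sum_j a * (A i j * u j) = 0.
  rewrite exchange_big /=; apply: big1 => j _.
  transitivity (\sum_i A i j * (a * u j)).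
    by apply: eq_bigr => i _; ring.
  by rewrite -mulr_suml cs mul0r.
have T3 : \sum_i \sum_j (u i * a * A i j + a ^+ 2 * A i j) = 0.
  apply: big1 => i _; transitivity ((u i * a + a ^+ 2) * \sum_j A i j).
    by rewrite mulr_sumr; apply: eq_bigr => j _; ring.
  by rewrite rs mulr0.
by rewrite T2 T3 !addr0.
Qed.

Variable n : nat.
Variable B : 'M[R]_n.
Variable k : R.
Hypothesis Brow : forall i, \sum_j B i j = k.
Hypothesis Bcol : forall j, \sum_i B i j = k.

Definition Xf (u v : 'I_n -> R) := \sum_i \sum_j u i * B i j * v j.
Definition Sf (u v : 'I_n -> R) := \sum_i \sum_j B i j * (u i + v j) ^+ 2.

Lemma S_id u v : Sf u v = k * n2 u + k * n2 v + 2 * Xf u v.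
Proof.
rewrite /Sf /n2 /Xf.
transitivity (\sum_i \sum_j B i j * u i ^+ 2 +
   (\sum_i \sum_j B i j * v j ^+ 2 + 2 * \sum_i \sum_j u i * B i j * v j)).
  rewrite mulr_sumr -!big_split /=; apply: eq_bigr => i _.
  rewrite mulr_sumr -!big_split /=; apply: eq_bigr => j _; ring.
rewrite addrA; congr (_ + _ + _).
  rewrite mulr_sumr; apply: eq_bigr => i _.
  by rewrite -mulr_suml Brow mulrC.
rewrite exchange_big /= mulr_sumr; apply: eq_bigr => j _.
by rewrite -mulr_suml Bcol mulrC.
Qed.

Hypothesis Bge0 : forall i j, 0 <= B i j.

Lemma n2_ge0 m (x : 'I_m -> R) : 0 <= n2 x.
Proof. by apply: sumr_ge0 => i _; exact: sqr_ge0. Qed.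

Lemma S_bound u v : Sf u v <= 2 * k * (n2 u + n2 v).
Proof.
have D0 : 0 <= Sf u (fun j => - v j).
  by apply: sumr_ge0 => i _; apply: sumr_ge0 => j _; apply: mulr_ge0 => //; exact: sqr_ge0.
have nv : n2 (fun j => - v j) = n2 v.
  by apply: eq_bigr => j _; rewrite sqrrN.
have xv : Xf u (fun j => - v j) = - Xf u v.
  rewrite /Xf -sumrN; apply: eq_bigr => i _; rewrite -sumrN.
  by apply: eq_bigr => j _; rewrite mulrN.
move: D0; rewrite S_id nv xv S_id; lra.
Qed.

Lemma S_shift u v a : Sf (fun i => u i + a) (fun j => v j - a) = Sf u v.
Proof.
apply: eq_bigr => i _; apply: eq_bigr => j _.
by congr (_ * _); congr (_ ^+ _); ring.
Qed.

Lemma key_ineq (Q1 Q2 : 'M[R]_n) (l1 l2 p : R) (u v : 'I_n -> R) :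
  (forall i, \sum_j Q1 i j = 0) -> (forall j, \sum_i Q1 i j = 0) ->
  (forall i, \sum_j Q2 i j = 0) -> (forall j, \sum_i Q2 i j = 0) ->
  (forall x, \sum_i x i = 0 -> l1 * n2 x <= qfs Q1 x) ->
  (forall x, \sum_i x i = 0 -> l2 * n2 x <= qfs Q2 x) ->
  0 <= p -> 2 * k * p <= l1 -> 2 * k * p <= l2 -> (0 < n)%N ->
  \sum_i u i + \sum_i v i = 0 ->
  p * Sf u v <= qfs Q1 u + qfs Q2 v.
Proof.
move=> r1 c1 r2 c2 H1 H2 p0 pl1 pl2 n0 uv.
set a := (\sum_i u i) / n%:R.
have nz : n%:R != 0 :> R by rewrite pnatr_eq0 -lt0n.
set u' := fun i => u i + - a.
set v' := fun j => v j - - a.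
have hu : \sum_i u' i = 0.
  rewrite /u' big_split /= sumr_const card_ord /a.
  by rewrite mulNrn -(mulr_natr ((\sum_i u i) / n%:R)) divfK // subrr.
have hv : \sum_i v' i = 0.
  rewrite /v' big_split /= sumr_const card_ord /a opprK.
  by rewrite -(mulr_natr ((\sum_i u i) / n%:R)) divfK // addrC.
have qu : qfs Q1 u = qfs Q1 u' by rewrite /u' (qfs_shift u (- a) r1 c1).
have qv : qfs Q2 v = qfs Q2 v'.
  by rewrite /v' (qfs_shift v (- - a) r2 c2).
have -> : Sf u v = Sf u' v' by rewrite /u' /v' S_shift.
rewrite qu qv.
have b1 := H1 _ hu; have b2 := H2 _ hv.
have Sb := S_bound u' v'.
have g1 := n2_ge0 u'; have g2 := n2_ge0 v'.
have e1 : 2 * k * p * n2 u' <= l1 * n2 u' by apply: ler_wpM2r.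
have e2 : 2 * k * p * n2 v' <= l2 * n2 v' by apply: ler_wpM2r.
have e3 : p * Sf u' v' <= p * (2 * k * (n2 u' + n2 v')) by apply: ler_wpM2l.
lra.
Qed.

End Quad.

Section Block.
Variable R : realType.
Variable n : nat.

Definition Xg (M : 'M[R]_n) (u v : 'I_n -> R) := \sum_i \sum_j u i * M i j * v j.

Lemma qfs_block (A1 A2 A3 A4 : 'M[R]_n) (x : 'I_(n + n) -> R) :
  qfs (block_mx A1 A2 A3 A4) x =
  qfs A1 (fun i => x (lshift n i)) + Xg A2 (fun i => x (lshift n i)) (fun i => x (rshift n i))
  + Xg A3 (fun i => x (rshift n i)) (fun i => x (lshift n i)) + qfs A4 (fun i => x (rshift n i)).
Proof.
rewrite /qfs /Xg big_split_ord /=.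
rewrite (eq_bigr (fun i => \sum_j x (lshift n i) * A1 i j * x (lshift n j) +
                          \sum_j x (lshift n i) * A2 i j * x (rshift n j))); last first.
  move=> i _; rewrite big_split_ord /=; congr (_ + _); apply: eq_bigr => j _.
    by rewrite block_mxEul.
  by rewrite block_mxEur.
rewrite [X in _ + X](eq_bigr (fun i => \sum_j x (rshift n i) * A3 i j * x (lshift n j) +
                          \sum_j x (rshift n i) * A4 i j * x (rshift n j))); last first.
  move=> i _; rewrite big_split_ord /=; congr (_ + _); apply: eq_bigr => j _.
    by rewrite block_mxEdl.
  by rewrite block_mxEdr.
rewrite !big_split /=; lra.
Qed.

Lemma n2_split (x : 'I_(n + n) -> R) :
  n2 x = n2 (fun i => x (lshift n i)) + n2 (fun i => x (rshift n i)).
Proof. by rewrite /n2 big_split_ord. Qed.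

Lemma qfs_scal (A : 'M[R]_n) (c : R) u : qfs (A + c%:M) u = qfs A u + c * n2 u.
Proof.
rewrite /qfs /n2 mulr_sumr -big_split /=; apply: eq_bigr => i _.
rewrite (bigD1 i) // [X in _ = X + _](bigD1 i) //= addrAC; congr (_ + _).
  by rewrite !mxE eqxx mulr1n; ring.
apply: eq_bigr => j /negbTE ji.
by rewrite !mxE eq_sym ji mulr0n addr0; ring.
Qed.

Lemma Xg_B (B : 'M[R]_n) (p : R) u v : Xg (- p *: B) u v = - p * Xf B u v.
Proof.
rewrite /Xg /Xf mulr_sumr; apply: eq_bigr => i _; rewrite mulr_sumr.
by apply: eq_bigr => j _; rewrite !mxE; ring.
Qed.

Lemma Xg_BT (B : 'M[R]_n) (p : R) u v : Xg (- p *: B^T) v u = - p * Xf B u v.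
Proof.
rewrite /Xg /Xf mulr_sumr exchange_big; apply: eq_bigr => i _; rewrite mulr_sumr.
by apply: eq_bigr => j _; rewrite !mxE; ring.
Qed.

Lemma sum01 (f : 'I_n -> R) (A : {set 'I_n}) :
  (forall j, f j = (j \in A)%:R) -> \sum_j f j = #|A|%:R.
Proof.
move=> hf; rewrite (eq_bigr (fun j => if j \in A then 1 else 0)); last first.
  by move=> j _; rewrite hf; case: (j \in A).
by rewrite -big_mkcond /= sumr_const.
Qed.

End Block.

Section Conc.
Variable R : realType.
Variable n : nat.

Lemma lap_entry_sym (e : rel 'I_n) : simple_graph e ->
  forall i j, laplacian R e i j = laplacian R e j i.
Proof.
move=> [se _] i j; rewrite /laplacian !mxE.
have [->|nij] := eqVneq i j; first by [].
by rewrite se.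
Qed.

Lemma lap_sym (e : rel 'I_n) : simple_graph e ->
  trmx (laplacian R e) = laplacian R e.
Proof.
by move=> ge; apply/matrixP => i j; rewrite mxE lap_entry_sym.
Qed.

Lemma lap_rows (e : rel 'I_n) : simple_graph e ->
  forall i, \sum_j laplacian R e i j = 0.
Proof.
move=> [se ir] i; rewrite (bigD1 i) //= mxE eqxx.
have -> : \sum_(j | j != i) laplacian R e i j = - \sum_(j | j != i) (e i j)%:R.
  rewrite -sumrN; apply: congr_big => // j0 /negbTE ji.
  by rewrite /laplacian mxE eq_sym ji.
have deg : \sum_j ((e i j)%:R : R) = #|[set l | e i l]|%:R.
  by apply: sum01 => j; rewrite inE.
rewrite -deg (bigD1 i) //= ir add0r subrr //.
Qed.

Lemma lap_cols (e : rel 'I_n) : simple_graph e ->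
  forall j, \sum_i laplacian R e i j = 0.
Proof.
move=> ge j; rewrite -[RHS](lap_rows ge j); apply: congr_big => // i0 _.
exact: lap_entry_sym.
Qed.

Lemma ones_mul m (M : 'M[R]_(n, m)) (c : R) :
  (forall j, \sum_i M i j = c) -> (const_mx 1 : 'rV[R]_n) *m M = c *: const_mx 1.
Proof.
move=> h; apply/rowP => j; rewrite !mxE -(h j) mulr1.
by apply: congr_big => // i0 _; rewrite mxE mul1r.
Qed.

End Conc.

Section Eig.
Variable R : realType.
Variables (n k : nat) (Q1 Q2 B : 'M[R]_n) (p : R).
Hypothesis c1 : forall j, \sum_i Q1 i j = 0.
Hypothesis c2 : forall j, \sum_i Q2 i j = 0.
Hypothesis Bc : forall j, \sum_i B i j = k%:R.
Hypothesis Br : forall i, \sum_j B i j = k%:R.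

Lemma oBT : (const_mx 1 : 'rV[R]_n) *m B^T = k%:R *: const_mx 1.
Proof.
apply: ones_mul => j; rewrite -(Br j); apply: congr_big => // i _.
by rewrite mxE.
Qed.

Lemma eig0 : (const_mx 1 : 'rV[R]_(n + n)) *m supraQ k Q1 Q2 B p = 0.
Proof.
rewrite -row_mx_const /supraQ mul_row_block.
rewrite !mulmxDr !mul_mx_scalar -!scalemxAr (ones_mul c1) (ones_mul c2).
rewrite (ones_mul Bc) oBT -row_mx0.
by congr row_mx; apply/rowP => j; rewrite !mxE; ring.
Qed.

Lemma eig1 : row_mx (const_mx 1) (- const_mx 1) *m supraQ k Q1 Q2 B p =
  (2 * k%:R * p) *: row_mx (const_mx 1 : 'rV[R]_n) (- const_mx 1).
Proof.
rewrite /supraQ mul_row_block scale_row_mx.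
rewrite !mulmxDr !mul_mx_scalar !mulNmx -!scalemxAr (ones_mul c1) (ones_mul c2).
rewrite (ones_mul Bc) oBT.
by congr row_mx; apply/rowP => j; rewrite !mxE; ring.
Qed.

End Eig.

Unset Implicit Arguments.

Lemma size2 (R : eqType) (s : seq R) x y : x \in s -> y \in s -> x != y -> (1 < size s)%N.
Proof.
case: s => [|a [|b t]] //=; rewrite !inE => /eqP -> /eqP ->; by rewrite eqxx.
Qed.

Theorem mainTheorem3 (R : realType) (n k : nat) (e1 e2 : rel 'I_n) (B : 'M[R]_n) :
  simple_graph e1 -> simple_graph e2 ->
  (1 <= k <= n)%N ->
  (forall i j, B i j = 0 \/ B i j = 1) ->
  (forall i, #|[set j | B i j == 1]| = k) ->
  (forall j, #|[set i | B i j == 1]| = k) ->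
  ((((2 * k%:R)^-1 * Num.min (second_smallest_eig (laplacian R e1))
                             (second_smallest_eig (laplacian R e2)))%:E
    <= transition_threshold k (laplacian R e1) (laplacian R e2) B)%E).
Proof.
move=> g1 g2 /andP[k1 kn] B01 Brc Bcc.
have n0 : (0 < n)%N by apply: leq_trans kn.
set Q1 := laplacian R e1; set Q2 := laplacian R e2.
set l1 := second_smallest_eig Q1; set l2 := second_smallest_eig Q2.
set c := (2 * k%:R)^-1 * Num.min l1 l2.
have B01' i j : B i j = (B i j == 1)%:R.
  by case: (B01 i j) => ->; [rewrite eq_sym oner_eq0 | rewrite eqxx].
have Br : forall i, \sum_j B i j = k%:R.
  by move=> i; rewrite -(Brc i); apply: sum01 => j; rewrite inE -B01'.
have Bc : forall j, \sum_i B i j = k%:R.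
  by move=> j; rewrite -(Bcc j); apply: sum01 => i; rewrite inE -B01'.
have Bge0 : forall i j, 0 <= B i j.
  by move=> i j; case: (B01 i j) => ->; rewrite ?lexx ?ler01.
have kR : (0 < k%:R :> R) by rewrite ltr0n.
rewrite /transition_threshold.
have [cle0|cgt0] := leP c 0.
  apply: (@le_trans _ _ (0%:E)); first by rewrite lee_fin.
  by apply: ereal_sup_ubound; exists 0 => //; left.
apply: ereal_sup_ubound; exists c => //; right; split => //.
have k2 : 0 < 2 * k%:R :> R by rewrite mulr_gt0 // ltr0n.
have mpos : 0 < Num.min l1 l2.
  by move: cgt0; rewrite /c pmulr_rgt0 // invr_gt0.
have l1p : 0 < l1 by move: mpos; rewrite lt_min => /andP[].
have l2p : 0 < l2 by move: mpos; rewrite lt_min => /andP[].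
have kc : 2 * k%:R * c = Num.min l1 l2 by rewrite /c mulrA mulfV ?mul1r // gt_eqF.
have ck1 : 2 * k%:R * c <= l1 by rewrite kc ge_min lexx.
have ck2 : 2 * k%:R * c <= l2 by rewrite kc ge_min lexx orbT.
have sQ1 := lap_sym R g1; have sQ2 := lap_sym R g2.
have r1 := lap_rows R g1; have r2 := lap_rows R g2.
have c1 := lap_cols R g1; have c2 := lap_cols R g2.
have w0 : (const_mx 1 : 'rV[R]_n) != 0.
  by apply/eqP => /rowP /(_ (Ordinal n0)); rewrite !mxE; apply/eqP; exact: oner_neq0.
have H1 : forall x, \sum_i x i = 0 -> l1 * n2 x <= qfs Q1 x.
  move=> x hx; apply: (rayleigh_lower (w := const_mx 1) sQ1 (spectrum_sym sQ1)) => //.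
  - by rewrite (ones_mul c1) scale0r.
  - by rewrite /dotr -[RHS]hx; apply: congr_big => // i _; rewrite mxE mulr1.
have H2 : forall x, \sum_i x i = 0 -> l2 * n2 x <= qfs Q2 x.
  move=> x hx; apply: (rayleigh_lower (w := const_mx 1) sQ2 (spectrum_sym sQ2)) => //.
  - by rewrite (ones_mul c2) scale0r.
  - by rewrite /dotr -[RHS]hx; apply: congr_big => // i _; rewrite mxE mulr1.
set S := supraQ k Q1 Q2 B c.
have sS : trmx S = S.
  rewrite /S /supraQ tr_block_mx !linearD /= !tr_scalar_mx sQ1 sQ2 !linearZ /= trmxK.
  by [].
have spS := spectrum_sym sS.
set s := spectrum S in spS *.
have in0 : 0 \in s.
  have : root (char_poly S) 0.
    rewrite -eigenvalue_root_char; apply/eigenvalueP; exists (const_mx 1).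
      by rewrite eig0 // scale0r.
    by apply/eqP => /rowP /(_ (Ordinal (ltn_addr n n0))); rewrite !mxE; apply/eqP; exact: oner_neq0.
  by case: spS => _ ->; rewrite root_prod_XsubC.
have in1 : 2 * k%:R * c \in s.
  have : root (char_poly S) (2 * k%:R * c).
    rewrite -eigenvalue_root_char; apply/eigenvalueP.
    exists (row_mx (const_mx 1) (- const_mx 1)); first by rewrite eig1.
    apply/eqP => /rowP /(_ (lshift n (Ordinal n0))); rewrite row_mxEl !mxE.
    by apply/eqP; exact: oner_neq0.
  by case: spS => _ ->; rewrite root_prod_XsubC.
have pos : 0 < 2 * k%:R * c by rewrite mulr_gt0.
have neq : 0 != 2 * k%:R * c by rewrite lt_eqF.
have up : s`_1 <= 2 * k%:R * c.
  by case: spS => ss _; apply: (sorted_s1_le ss in0 in1 neq (ltW pos) (lexx _)).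
have sz := size2 _ _ _ _ in0 in1 neq.
have lo : 2 * k%:R * c <= s`_1.
  apply: (rayleigh_upper (w := const_mx 1) sS spS sz) => x hx.
  have hx' : \sum_i x i = 0.
    by rewrite -[RHS]hx; apply: congr_big => // i _; rewrite mxE mulr1.
  rewrite /S /supraQ qfs_block !qfs_scal Xg_B Xg_BT n2_split.
  set u := fun i => x (lshift n i); set v := fun i => x (rshift n i).
  have huv : \sum_i u i + \sum_i v i = 0.
    by rewrite -[RHS]hx' big_split_ord.
  have key := key_ineq Br Bc Bge0 r1 c1 r2 c2 H1 H2 (ltW cgt0) ck1 ck2 n0 huv.
  rewrite (S_id Br Bc) in key.
  lra.
by rewrite /second_smallest_eig -/s; apply/eqP; rewrite eq_le up lo.
Qed.
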